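(* Let $G=\operatorname{Gp}\langle X\mid R\rangle$ and let $\Re$ be a complete rewriting system for $G$ on $X\cup X^{-1}$ satisfying the condition $C^{+}$. Then for all positive words $u,v\in X^{*}$: $u\equiv_{\Re}v$ if and only if $u\equiv_{\Re^{+}}v$.
   Context: A rewriting system on an alphabet $\Sigma$ is a set of rules $l\rightarrow r$ in $\Sigma^{*}\times\Sigma^{*}$; $ulv$ reduces to $urv$. Complete means terminating (no infinite reduction chains) and confluent (words with a common ancestor have a common descendant). $\equiv_{\Re}$ is the congruence generated by $\Re$. A rewriting system for $G$ is one on $X\cup X^{-1}$ whose congruence equals the congruence generated by $R\cup\{xx^{-1}=1,x^{-1}x=1:x\in X\}$. A word is positive if it lies in $X^{*}$ (the empty word counts as positive). $\Re^{+}$ is the set of rules of $\Re$ with positive left-hand side. $\Re$ satisfies $C^{+}$ if $\Re^{+}\neq\emptyset$ and every rule of $\Re$ with positive left-hand side has positive right-hand side. *)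

(* Defs.v *)
From Stdlib Require Import List Relations.
Import ListNotations.
Set Implicit Arguments.

(* A letter of X ∪ X^{-1}: [inl x] is the generator x, [inr x] is x^{-1}. *)
Definition letter (X : Type) : Type := (X + X)%type.
Definition word (X : Type) : Type := list (letter X).

Definition rsys (X : Type) : Type := word X -> word X -> Prop.

Definition step X (Re : rsys X) (w w' : word X) : Prop :=
  exists u l r v, Re l r /\ w = u ++ l ++ v /\ w' = u ++ r ++ v.

Definition reduces X (Re : rsys X) : relation (word X) :=
  clos_refl_trans (word X) (step Re).

Definition terminating X (Re : rsys X) : Prop :=
  ~ exists f : nat -> word X, forall n, step Re (f n) (f (S n)).

Definition confluent X (Re : rsys X) : Prop :=
  forall w w1 w2, reduces Re w w1 -> reduces Re w w2 ->
    exists w3, reduces Re w1 w3 /\ reduces Re w2 w3.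

Definition complete X (Re : rsys X) : Prop := terminating Re /\ confluent Re.

Inductive congr X (Re : rsys X) : word X -> word X -> Prop :=
| congr_base : forall l r, Re l r -> congr Re l r
| congr_refl : forall w, congr Re w w
| congr_sym : forall w w', congr Re w w' -> congr Re w' w
| congr_trans : forall w1 w2 w3, congr Re w1 w2 -> congr Re w2 w3 -> congr Re w1 w3
| congr_ctx : forall u v w w', congr Re w w' -> congr Re (u ++ w ++ v) (u ++ w' ++ v).

Definition group_rels X (R : rsys X) : rsys X :=
  fun l r => R l r \/
    exists x : X, (l = [inl x; inr x] \/ l = [inr x; inl x]) /\ r = [].

Definition rsys_for_group X (R Re : rsys X) : Prop :=
  forall u v, congr Re u v <-> congr (group_rels R) u v.

Definition is_pos_letter X (a : letter X) : Prop := exists x, a = inl x.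

Definition positive X (w : word X) : Prop := Forall (@is_pos_letter X) w.

Definition pos_part X (Re : rsys X) : rsys X :=
  fun l r => Re l r /\ positive l.

Definition Cplus X (Re : rsys X) : Prop :=
  (exists l r, pos_part Re l r) /\
  (forall l r, Re l r -> positive l -> positive r).

(* Main.v *)
Require Import Defs.
From Stdlib Require Import List Relations.
Import ListNotations.

Lemma step_ctx X (Re : rsys X) u v w w' :
  step Re w w' -> step Re (u ++ w ++ v) (u ++ w' ++ v).
Proof.
  intros [u0 [l [r [v0 [H [-> ->]]]]]].
  exists (u ++ u0), l, r, (v0 ++ v). split; [exact H|].
  split; rewrite !app_assoc; reflexivity.
Qed.

Lemma red_ctx X (Re : rsys X) u v w w' :
  reduces Re w w' -> reduces Re (u ++ w ++ v) (u ++ w' ++ v).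
Proof.
  induction 1.
  - apply rt_step, step_ctx; assumption.
  - apply rt_refl.
  - eapply rt_trans; eassumption.
Qed.

Lemma step_congr X (Re : rsys X) w w' : step Re w w' -> congr Re w w'.
Proof.
  intros [u0 [l [r [v0 [H [-> ->]]]]]].
  apply congr_ctx, congr_base, H.
Qed.

Lemma red_congr X (Re : rsys X) w w' : reduces Re w w' -> congr Re w w'.
Proof.
  induction 1.
  - apply step_congr; assumption.
  - apply congr_refl.
  - eapply congr_trans; eassumption.
Qed.

Lemma congr_join X (Re : rsys X) : confluent Re ->
  forall u v, congr Re u v -> exists w, reduces Re u w /\ reduces Re v w.
Proof.
  intros Hc u v H. induction H.
  - exists r. split; [|apply rt_refl]. apply rt_step.
    exists [], l, r, []. split; [exact H|]. split; simpl; rewrite app_nil_r; reflexivity.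
  - exists w. split; apply rt_refl.
  - destruct IHcongr as [z [H1 H2]]. exists z. auto.
  - destruct IHcongr1 as [z1 [H1 H2]]. destruct IHcongr2 as [z2 [H3 H4]].
    destruct (Hc _ _ _ H2 H3) as [z [H5 H6]].
    exists z. split; eapply rt_trans; eassumption.
  - destruct IHcongr as [z [H1 H2]]. exists (u ++ z ++ v).
    split; apply red_ctx; assumption.
Qed.

Lemma step_pos X (Re : rsys X) : (forall l r, Re l r -> positive l -> positive r) ->
  forall w w', step Re w w' -> positive w -> step (pos_part Re) w w' /\ positive w'.
Proof.
  intros HC w w' [u0 [l [r [v0 [H [-> ->]]]]]] Hp.
  unfold positive in *.
  apply Forall_app in Hp as [Hu Hp]. apply Forall_app in Hp as [Hl Hv].
  split.
  - exists u0, l, r, v0. repeat split; auto.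
  - apply Forall_app; split; auto. apply Forall_app; split; auto.
    apply (HC l r H Hl).
Qed.

Lemma red_pos X (Re : rsys X) : (forall l r, Re l r -> positive l -> positive r) ->
  forall w w', reduces Re w w' -> positive w -> reduces (pos_part Re) w w' /\ positive w'.
Proof.
  intros HC w w' H. induction H; intros Hp.
  - destruct (@step_pos X Re HC _ _ H Hp). split; [apply rt_step|]; assumption.
  - split; [apply rt_refl|assumption].
  - destruct (IHclos_refl_trans1 Hp) as [H1 P1].
    destruct (IHclos_refl_trans2 P1) as [H2 P2].
    split; [eapply rt_trans; eassumption|assumption].
Qed.

Lemma congr_sub X (Re : rsys X) u v : congr (pos_part Re) u v -> congr Re u v.
Proof.
  induction 1.
  - apply congr_base, H.
  - apply congr_refl.
  - apply congr_sym; assumption.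
  - eapply congr_trans; eassumption.
  - apply congr_ctx; assumption.
Qed.

Theorem lemma3p7 (X : Type) (R Re : rsys X) :
  rsys_for_group R Re -> complete Re -> Cplus Re ->
  forall u v : word X, positive u -> positive v ->
    (congr Re u v <-> congr (pos_part Re) u v).
Proof.
  intros _ [_ Hc] [_ HC] u v Pu Pv. split.
  - intros H. destruct (@congr_join X Re Hc _ _ H) as [w [H1 H2]].
    destruct (@red_pos X Re HC _ _ H1 Pu) as [H1' _].
    destruct (@red_pos X Re HC _ _ H2 Pv) as [H2' _].
    eapply congr_trans; [apply red_congr; exact H1'|].
    apply congr_sym, red_congr; exact H2'.
  - apply congr_sub.
Qed.
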